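(* Let $p$ be an odd prime with $3 \mid (p-1)$. Then there exists an MDS $(3p,\,12)_{p}$ symbol-pair code, i.e., a code $\mathcal{C}\subseteq \mathbb{F}_p^{3p}$ with minimum symbol-pair distance $d_p(\mathcal{C})=12$ and $|\mathcal{C}| = p^{3p-12+2}$.
   Context: For a vector $\mathbf{x}=(x_0,\dots,x_{n-1})\in\mathbb{F}_q^n$ (indices taken modulo $n$), the symbol-pair distance between $\mathbf{x},\mathbf{y}\in\mathbb{F}_q^n$ is $d_p(\mathbf{x},\mathbf{y})=|\{i\in\mathbb{Z}_n : (x_i,x_{i+1})\neq(y_i,y_{i+1})\}|$. The minimum symbol-pair distance of a code $\mathcal{C}\subseteq\mathbb{F}_q^n$ is $d_p(\mathcal{C})=\min\{d_p(\mathbf{x},\mathbf{y}) : \mathbf{x},\mathbf{y}\in\mathcal{C},\ \mathbf{x}\neq\mathbf{y}\}$. Any code of length $n$ over $\mathbb{F}_q$ with minimum symbol-pair distance $d_p$ (where $2\le d_p\le n$) satisfies the Singleton-type bound $|\mathcal{C}|\le q^{n-d_p+2}$; a code attaining equality is called an MDS symbol-pair code. An $(n,d_p)_q$ symbol-pair code is a code of length $n$ over $\mathbb{F}_q$ with minimum symbol-pair distance $d_p$. *)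

(* Defs.v *)
From mathcomp Require Import all_boot all_algebra.
Set Implicit Arguments. Unset Strict Implicit. Unset Printing Implicit Defensive.

Definition word (F : finType) (n : nat) := {ffun 'I_n -> F}.

Definition pair_dist (F : finType) (n : nat) (x y : word F n) : nat :=
  #|[set i : 'I_n | (x i != y i) || (x (ordS i) != y (ordS i))]|.

Definition min_pair_dist (F : finType) (n : nat) (C : {set word F n}) (d : nat) : Prop :=
  (exists x y, [/\ x \in C, y \in C, x != y & pair_dist x y = d]) /\
  (forall x y, x \in C -> y \in C -> x != y -> d <= pair_dist x y).

(* Main.v *)
Require Import Defs.
From mathcomp Require Import all_boot all_algebra.
From mathcomp Require Import finfield.
From mathcomp Require Import ring zify.
Set Warnings "-notation-overridden -ambiguous-paths".
Set Implicit Arguments. Unset Strict Implicit. Unset Printing Implicit Defensive.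
Import GRing.Theory.
Local Open Scope ring_scope.

Section Code.
Variable p : nat.
Hypothesis hp : prime p.
Hypothesis p5 : (5 < p)%N.
Local Notation F := 'F_p.
Variable w : F.
Hypothesis hw : w ^+ 2 + w + 1 = 0.
Local Notation n := (3 * p)%N.

Lemma w3 : w ^+ 3 = 1.
Proof.
apply/eqP; rewrite -subr_eq0.
have -> : w ^+ 3 - 1 = (w - 1) * (w ^+ 2 + w + 1) by ring.
by rewrite hw mulr0.
Qed.

Lemma wX_mod x : w ^+ (x %% 3)%N = w ^+ x.
Proof. by rewrite {2}(divn_eq x 3) exprD mulnC exprM w3 expr1n mul1r. Qed.

Lemma w_neq0 : w != 0.
Proof. apply/eqP=> w0; move: hw; rewrite w0 expr0n /= !add0r => /eqP; by rewrite oner_eq0. Qed.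

Lemma natF_neq0 m : (0 < m)%N -> (m <= 5)%N -> (m%:R : F) != 0.
Proof.
move=> m0 m5; rewrite -(dvdn_pcharf (pchar_Fp hp)); apply/negP=> /dvdn_leq.
by move=> /(_ m0); lia.
Qed.

Lemma n_gt0 : (0 < n)%N.
Proof. by rewrite muln_gt0 /= prime_gt0. Qed.

Definition pos (x : nat) : 'I_n := Ordinal (ltn_pmod x n_gt0).
Lemma pos_val (i : 'I_n) : pos i = i.
Proof. by apply: val_inj; rewrite /= modn_small. Qed.
Lemma val_pos x : (pos x : nat) = (x %% n)%N. Proof. by []. Qed.
Lemma ordS_pos x : ordS (pos x) = pos x.+1.
Proof. by apply: val_inj; rewrite /= -addn1 modnDml addn1. Qed.
Lemma pos_modn x : pos (x %% n)%N = pos x.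
Proof. by apply: val_inj; rewrite /= modn_mod. Qed.
Lemma pos_addl x y : pos (pos x + y)%N = pos (x + y)%N.
Proof. by apply: val_inj; rewrite /= modnDml. Qed.

Definition u (x : nat) : F := x%:R.
Lemma u_mod x : u (x %% n)%N = u x.
Proof.
by rewrite /u -(Fp_nat_mod hp) (modn_dvdm _ (dvdn_mull 3 (dvdnn p))) Fp_nat_mod.
Qed.
Lemma class_mod x : (x %% n %% 3 = x %% 3)%N.
Proof. by rewrite (modn_dvdm _ (dvdn_mulr p (dvdnn 3))). Qed.
Lemma w_modn x : w ^+ (x %% n)%N = w ^+ x.
Proof. by rewrite -wX_mod class_mod wX_mod. Qed.

Lemma cop3 : coprime 3 p.
Proof. by rewrite prime_coprime // dvdn_prime2 //; lia. Qed.

Lemma u_inj (i j : 'I_n) : (i %% 3 = j %% 3)%N -> u i = u j -> i = j.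
Proof.
move=> h3 hu; apply: val_inj => /=.
have hp' : (i %% p = j %% p)%N by rewrite -!(val_Fp_nat hp) -/(u i) hu.
have : (i == j %[mod 3 * p])%N by rewrite chinese_remainder ?cop3 // h3 hp' !eqxx.
by rewrite !modn_small // => /eqP.
Qed.


Definition mom (k j : nat) (c : word F n) : F :=
  \sum_(i < n) c i * w ^+ (k * i) * u i ^+ j.
Definition cm (t j : nat) (c : word F n) : F :=
  \sum_(i < n | (i %% 3 == t)%N) c i * u i ^+ j.

Lemma mom_cm k j c : mom k j c = \sum_(t < 3) w ^+ (k * t) * cm t j c.
Proof.
rewrite /mom (partition_big (fun i : 'I_n => Ordinal (ltn_pmod i (isT : (0 < 3)%N))) xpredT) //=.
apply: eq_bigr => t _; rewrite /cm mulr_sumr; apply: eq_big => i.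
  by rewrite -val_eqE /=.
move=> /eqP hi; rewrite -hi /= mulrCA mulrA; congr (_ * _ * _).
by rewrite !(mulnC k) !exprM wX_mod.
Qed.

Lemma mom_cm3 k j c :
  mom k j c = cm 0 j c + w ^+ k * cm 1 j c + w ^+ (k * 2) * cm 2 j c.
Proof.
by rewrite mom_cm !big_ord_recr big_ord0 /= add0r muln0 expr0 mul1r muln1.
Qed.


Lemma mom0 j c : mom 0 j c = cm 0 j c + cm 1 j c + cm 2 j c.
Proof. by rewrite mom_cm3 mul0n !expr0 !mul1r. Qed.
Lemma mom1 j c : mom 1 j c = cm 0 j c + w * cm 1 j c + w ^+ 2 * cm 2 j c.
Proof. by rewrite mom_cm3 mul1n expr1. Qed.
Lemma mom2 j c : mom 2 j c = cm 0 j c + w ^+ 2 * cm 1 j c + w ^+ 4 * cm 2 j c.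
Proof. by rewrite mom_cm3. Qed.

Lemma cm_ge3 t j c : (3 <= t)%N -> cm t j c = 0.
Proof.
move=> ht; rewrite /cm big_pred0 // => i; apply/negbTE.
by rewrite neq_ltn (leq_trans (ltn_pmod _ _) ht).
Qed.

Definition kk (l : nat) : nat := if (l < 5)%N then 0%N else if (l < 8)%N then 1%N else 2%N.
Definition jj (l : nat) : nat := if (l < 5)%N then l else if (l < 8)%N then (l - 5)%N else (l - 8)%N.
Definition mvec (c : word F n) : {ffun 'I_10 -> F} := [ffun l : 'I_10 => mom (kk l) (jj l) c].
Definition C : {set word F n} := [set c | mvec c == 0].

Lemma C_mom c : c \in C ->
  [/\ forall j, (j < 5)%N -> mom 0 j c = 0,
      forall j, (j < 3)%N -> mom 1 j c = 0 &
      forall j, (j < 2)%N -> mom 2 j c = 0].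
Proof.
rewrite inE => /eqP h.
have H (l : 'I_10) : mom (kk l) (jj l) c = 0.
  by have := congr1 (fun f : {ffun 'I_10 -> F} => f l) h; rewrite !ffunE.
split=> j hj.
- have hl : (j < 10)%N by lia.
  have := H (Ordinal hl). rewrite /kk /jj /=. rewrite hj. done.
- have hl : (j + 5 < 10)%N by lia.
  have := H (Ordinal hl); rewrite /kk /jj /=.
  rewrite (_ : (j + 5 < 5)%N = false); last by lia.
  rewrite (_ : (j + 5 < 8)%N = true); last by lia.
  by rewrite addnK.
- have hl : (j + 8 < 10)%N by lia.
  have := H (Ordinal hl); rewrite /kk /jj /=.
  rewrite (_ : (j + 8 < 5)%N = false); last by lia.
  rewrite (_ : (j + 8 < 8)%N = false); last by lia.
  by rewrite addnK.
Qed.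

Lemma w_neq1 : w != 1.
Proof.
apply/eqP=> w1; move: hw; rewrite w1 expr1n => /eqP.
have -> : (1 + 1 + 1 : F) = 3%:R by ring.
by rewrite (negbTE (natF_neq0 _ _)).
Qed.

Lemma three_neq0 : (3%:R : F) != 0. Proof. exact: natF_neq0. Qed.

Lemma dft3 a b c0 : a + b + c0 = 0 -> a + w * b + w ^+ 2 * c0 = 0 ->
  a + w ^+ 2 * b + w ^+ 4 * c0 = 0 -> [/\ a = 0, b = 0 & c0 = 0].
Proof.
move=> h1 h2 h3.
have ea : 3%:R * a = (a + b + c0) + (a + w * b + w ^+ 2 * c0) + (a + w ^+ 2 * b + w ^+ 4 * c0)
   - (w ^+ 2 + w + 1) * (b + c0 - c0 * w + c0 * w ^+ 2) by ring.
have eb : 3%:R * b = (a + b + c0) + w ^+ 2 * (a + w * b + w ^+ 2 * c0) + w * (a + w ^+ 2 * b + w ^+ 4 * c0)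
   - (w ^+ 2 + w + 1) * (a - 2%:R * b + 2%:R * b * w + c0 - c0 * w + c0 * w ^+ 3) by ring.
have ec : 3%:R * c0 = (a + b + c0) + w * (a + w * b + w ^+ 2 * c0) + w ^+ 2 * (a + w ^+ 2 * b + w ^+ 4 * c0)
   - (w ^+ 2 + w + 1) * (a + b - b * w + b * w ^+ 2 - 2%:R * c0 + 2%:R * c0 * w - c0 * w ^+ 3 + c0 * w ^+ 4) by ring.
rewrite h1 h2 h3 hw !(mul0r, add0r, addr0, subr0, mulr0, oppr0) in ea eb ec.
by split; [move: ea|move: eb|move: ec] => /eqP; rewrite mulf_eq0 (negbTE three_neq0) /= => /eqP.
Qed.

Definition lam c := cm 0 2 c.

Lemma cm_facts c : c \in C ->
  [/\ forall t, cm t 0 c = 0, forall t, cm t 1 c = 0,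
      cm 1 2 c = w * lam c, cm 2 2 c = w ^+ 2 * lam c &
      forall j, (j == 3)%N || (j == 4)%N -> cm 0 j c + cm 1 j c + cm 2 j c = 0].
Proof.
move=> /C_mom [h0 h1 h2].
have M01 j : (j < 2)%N -> forall t, cm t j c = 0.
  move=> hj.
  have := h0 j (ltn_trans hj (isT : (2 < 5)%N)); have := h1 j (ltn_trans hj (isT : (2 < 3)%N)); have := h2 j hj.
  rewrite mom0 mom1 mom2 => e2 e1 e0.
  have [a0 a1 a2] := dft3 e0 e1 e2.
  by case=> [|[|[|t]]] //; rewrite cm_ge3.
split; [exact: M01| exact: M01| | |].
- have := h0 2%N isT; have := h1 2%N isT; rewrite mom0 mom1 => e1 e0.
  have hw1 : w - 1 != 0 by rewrite subr_eq0 w_neq1.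
  rewrite /lam; apply/eqP; rewrite -subr_eq0 -(mulrI_eq0 _ (lregP hw1)); apply/eqP.
  have e : (w - 1) * (cm 1 2 c - w * cm 0 2 c) = w * (cm 0 2 c + cm 1 2 c + cm 2 2 c)
     + (1 + w) * (cm 0 2 c + w * cm 1 2 c + w ^+ 2 * cm 2 2 c) - (w ^+ 2 + w + 1) * (w * cm 2 2 c + cm 0 2 c + cm 1 2 c) by ring.
  by rewrite e e0 e1 hw !(mul0r, add0r, addr0, subr0, mulr0, oppr0).
- have := h0 2%N isT; have := h1 2%N isT; rewrite mom0 mom1 => e1 e0.
  have hw1 : w - 1 != 0 by rewrite subr_eq0 w_neq1.
  rewrite /lam; apply/eqP; rewrite -subr_eq0 -(mulrI_eq0 _ (lregP hw1)); apply/eqP.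
  have e : (w - 1) * (cm 2 2 c - w ^+ 2 * cm 0 2 c) = - (cm 0 2 c + cm 1 2 c + cm 2 2 c)
     + w ^+ 2 * (cm 0 2 c + w * cm 1 2 c + w ^+ 2 * cm 2 2 c) - (w ^+ 2 + w + 1) * (- cm 0 2 c + cm 0 2 c * w - cm 1 2 c + cm 1 2 c * w - cm 2 2 c * w + cm 2 2 c * w ^+ 2) by ring.
  by rewrite e e0 e1 hw !(mul0r, add0r, addr0, subr0, mulr0, oppr0).
- move=> j hj; have := h0 j; rewrite mom0; apply; move: hj; lia.
Qed.

Lemma pmom t (c : word F n) (Q : {poly F}) :
  \sum_(i < n | (i %% 3 == t)%N) c i * Q.[u i] = \sum_(j < size Q) Q`_j * cm t j c.
Proof.
rewrite /cm.
under eq_bigr => i _ do rewrite horner_coef mulr_sumr.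
rewrite exchange_big /=; apply: eq_bigr => j _; rewrite mulr_sumr.
by apply: eq_bigr => i _; rewrite mulrCA.
Qed.

Lemma RS t m (T : seq F) (c : word F n) :
  (forall j, (j < m)%N -> cm t j c = 0) ->
  (forall i : 'I_n, (i %% 3 = t)%N -> c i != 0 -> u i \in T) ->
  (size T <= m)%N -> forall i : 'I_n, (i %% 3 = t)%N -> c i = 0.
Proof.
move=> hm hT hsz i0 hi0; apply/eqP/negPn/negP => hc0.
pose T' := undup T.
have uT' : uniq T' := undup_uniq T.
have i0T : u i0 \in T' by rewrite mem_undup hT.
pose Q := \prod_(x <- rem (u i0) T') ('X - x%:P).
have szQ : (size Q <= m)%N.
  rewrite size_prod_XsubC size_rem //.
  have h1 := size_undup T; have h2 : (0 < size T')%N by case: (T') i0T.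
  by rewrite prednK // (leq_trans h1 hsz).
have : \sum_(i < n | (i %% 3 == t)%N) c i * Q.[u i] = 0.
  by rewrite pmom big1 // => j _; rewrite hm ?mulr0 // (leq_trans (ltn_ord j) szQ).
rewrite (bigD1 i0) /=; last by rewrite hi0.
rewrite big1 ?addr0.
  move=> /eqP; rewrite mulf_eq0 (negbTE hc0) /=.
  have : ~~ root Q (u i0) by rewrite root_prod_XsubC mem_rem_uniq // inE eqxx.
  by rewrite rootE => /negbTE ->.
move=> i /andP [hit hne]; case: (eqVneq (c i) 0) => [->|hci]; first by rewrite mul0r.
have : root Q (u i).
  rewrite root_prod_XsubC mem_rem_uniq // inE mem_undup hT ?andbT //; last by apply/eqP.
  apply/eqP => /u_inj; rewrite hi0 (eqP hit) => /(_ erefl) ie.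
  by rewrite ie eqxx in hne.
by rewrite rootE => /eqP ->; rewrite mulr0.
Qed.

Definition clsS t (c : word F n) := [set i : 'I_n | (i %% 3 == t)%N && (c i != 0)].

Lemma class_size t m (c : word F n) :
  (forall j, (j < m)%N -> cm t j c = 0) -> (exists i : 'I_n, (i %% 3 = t)%N /\ c i != 0) ->
  (m < #|clsS t c|)%N.
Proof.
move=> hm [i0 [hi0 hc0]]; rewrite ltnNge; apply/negP => hsz.
suff : c i0 = 0 by move/eqP; rewrite (negbTE hc0).
apply: (@RS t m [seq u i | i : 'I_n <- enum (clsS t c)] c hm) => //.
  by move=> i hi hci; apply: map_f; rewrite mem_enum inE hi eqxx hci.
by rewrite size_map -cardE.
Qed.

Lemma lin4 t (c : word F n) a0 a1 a2 a3 a4 :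
  \sum_(i < n | (i %% 3 == t)%N) c i * (a0 + a1 * u i + a2 * u i ^+ 2 + a3 * u i ^+ 3 + a4 * u i ^+ 4)
  = a0 * cm t 0 c + a1 * cm t 1 c + a2 * cm t 2 c + a3 * cm t 3 c + a4 * cm t 4 c.
Proof. rewrite /cm !mulr_sumr -!big_split /=; apply: eq_bigr => i _; ring. Qed.

Definition supp_in t (T : seq F) (c : word F n) :=
  forall i : 'I_n, (i %% 3 = t)%N -> c i != 0 -> u i \in T.

Lemma vanish t T (c : word F n) k : supp_in t T c ->
  \sum_(i < n | (i %% 3 == t)%N) c i * (u i ^+ k * \prod_(x <- T) (u i - x)) = 0.
Proof.
move=> hs; apply: big1 => i /eqP hi; case: (eqVneq (c i) 0) => [->|hci]; first by rewrite mul0r.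
by rewrite (big_rem _ (hs i hi hci)) /= subrr mul0r !mulr0.
Qed.

Lemma rec3 t (c : word F n) x y z : supp_in t [:: x; y; z] c -> cm t 0 c = 0 -> cm t 1 c = 0 ->
  cm t 3 c = (x + y + z) * cm t 2 c /\
  cm t 4 c = (x ^+ 2 + y ^+ 2 + z ^+ 2 + x * y + y * z + z * x) * cm t 2 c.
Proof.
move=> hs h0 h1.
have v0 := vanish 0 hs; have v1 := vanish 1 hs.
rewrite (eq_bigr (fun i => c i * (- (x * y * z) + (x * y + y * z + z * x) * u i + (- (x + y + z)) * u i ^+ 2 + 1 * u i ^+ 3 + 0 * u i ^+ 4))) in v0; last by move=> i _; rewrite !big_cons big_nil; ring.
rewrite (eq_bigr (fun i => c i * (0 + (- (x * y * z)) * u i + (x * y + y * z + z * x) * u i ^+ 2 + (- (x + y + z)) * u i ^+ 3 + 1 * u i ^+ 4))) in v1; last by move=> i _; rewrite !big_cons big_nil; ring.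
rewrite lin4 h0 h1 in v0; rewrite lin4 h1 in v1.
have e3 : cm t 3 c = (x + y + z) * cm t 2 c.
  apply/eqP; rewrite -subr_eq0; apply/eqP; rewrite -[RHS]v0; ring.
split=> //; apply/eqP; rewrite -subr_eq0; apply/eqP; rewrite -[RHS]v1 e3; ring.
Qed.

Lemma rec4 t (c : word F n) x0 x1 x2 x3 : supp_in t [:: x0; x1; x2; x3] c -> cm t 0 c = 0 -> cm t 1 c = 0 ->
  cm t 4 c = (x0 + x1 + x2 + x3) * cm t 3 c
     - (x0 * x1 + x0 * x2 + x0 * x3 + x1 * x2 + x1 * x3 + x2 * x3) * cm t 2 c.
Proof.
move=> hs h0 h1.
have v0 := vanish 0 hs.
rewrite (eq_bigr (fun i => c i * (x0 * x1 * x2 * x3 + (- (x0 * x1 * x2 + x0 * x1 * x3 + x0 * x2 * x3 + x1 * x2 * x3)) * u i + (x0 * x1 + x0 * x2 + x0 * x3 + x1 * x2 + x1 * x3 + x2 * x3) * u i ^+ 2 + (- (x0 + x1 + x2 + x3)) * u i ^+ 3 + 1 * u i ^+ 4))) in v0; last by move=> i _; rewrite !big_cons big_nil; ring.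
rewrite lin4 h0 h1 in v0.
apply/eqP; rewrite -subr_eq0; apply/eqP; rewrite -[RHS]v0; ring.
Qed.

Definition TT (L : seq (nat * F)) (r : nat) : seq F := [seq rv.2 | rv <- L & rv.1 == r].
Definition cover s (L : seq (nat * F)) (c : word F n) :=
  forall i : 'I_n, c i != 0 -> exists2 rv, rv \in L &
    [&& (rv.1 < 3)%N, (i %% 3 == (s + rv.1) %% 3)%N & u i == rv.2].

Lemma cover_supp s L (c : word F n) r : cover s L c -> (r < 3)%N -> supp_in ((s + r) %% 3) (TT L r) c.
Proof.
move=> hc hr i hi hci; have [[r' v] hL /and3P [hr' hi' /eqP hu]] := hc i hci.
rewrite /TT hu; apply/mapP; exists (r', v) => //.
rewrite mem_filter /= hL andbT; by move: hi'; rewrite hi eqn_modDl !modn_small //= => /eqP ->.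
Qed.

Lemma cm2_lam (c : word F n) t : c \in C -> (t < 3)%N -> cm t 2 c = w ^+ t * lam c.
Proof.
move=> hc; have [_ _ e1 e2 _] := cm_facts hc.
by case: t => [|[|[|t]]] // _; rewrite ?expr0 ?mul1r ?expr1.
Qed.

Lemma cmrel2 (c : word F n) s r : c \in C -> cm ((s + r) %% 3) 2 c = w ^+ (s + r) * lam c.
Proof. by move=> hc; rewrite cm2_lam ?wX_mod // ltn_pmod. Qed.

Lemma rel_sum s (f : nat -> F) : f 0%N + f 1%N + f 2%N = f ((s + 0) %% 3)%N + f ((s + 1) %% 3)%N + f ((s + 2) %% 3)%N.
Proof.
rewrite -!(modnDml s); have : (s %% 3 < 3)%N by rewrite ltn_pmod.
case: (s %% 3)%N => [|[|[|m]]] // _.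
- rewrite (_ : ((1 + 0) %% 3 = 1)%N) // (_ : ((1 + 1) %% 3 = 2)%N) // (_ : ((1 + 2) %% 3 = 0)%N) //.
  ring.
- rewrite (_ : ((2 + 0) %% 3 = 2)%N) // (_ : ((2 + 1) %% 3 = 0)%N) // (_ : ((2 + 2) %% 3 = 1)%N) //.
  ring.
Qed.

Lemma zero_class_cm (c : word F n) t j : (forall i : 'I_n, (i %% 3 = t)%N -> c i = 0) -> cm t j c = 0.
Proof. by move=> h; apply: big1 => i /eqP hi; rewrite h // mul0r. Qed.

Lemma wX_neq0 k : w ^+ k != 0. Proof. exact: expf_neq0 w_neq0. Qed.

Definition h2 (x y z : F) := x ^+ 2 + y ^+ 2 + z ^+ 2 + x * y + y * z + z * x.

Lemma good3 (c : word F n) s L x0 y0 z0 x1 y1 z1 x2 y2 z2 :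
  c \in C -> cover s L c ->
  TT L 0 = [:: x0; y0; z0] -> TT L 1 = [:: x1; y1; z1] -> TT L 2 = [:: x2; y2; z2] ->
  lam c * ((x0 + y0 + z0) + w * (x1 + y1 + z1) + w ^+ 2 * (x2 + y2 + z2)) = 0 /\
  lam c * (h2 x0 y0 z0 + w * h2 x1 y1 z1 + w ^+ 2 * h2 x2 y2 z2) = 0.
Proof.
move=> hc hcov e0 e1 e2.
have [f0 f1 _ _ f34] := cm_facts hc.
have := cover_supp hcov (isT : (0 < 3)%N); rewrite e0 => /rec3 /(_ (f0 _) (f1 _)) [a0 b0].
have := cover_supp hcov (isT : (1 < 3)%N); rewrite e1 => /rec3 /(_ (f0 _) (f1 _)) [a1 b1].
have := cover_supp hcov (isT : (2 < 3)%N); rewrite e2 => /rec3 /(_ (f0 _) (f1 _)) [a2 b2].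
rewrite !cmrel2 // in a0 b0 a1 b1 a2 b2.
have s3 := f34 3%N isT; have s4 := f34 4%N isT.
rewrite (rel_sum s (fun t => cm t 3 c)) /= a0 a1 a2 in s3.
rewrite (rel_sum s (fun t => cm t 4 c)) /= b0 b1 b2 in s4.
split; apply/eqP; rewrite -(mulrI_eq0 _ (lregP (wX_neq0 s))); apply/eqP.
  by rewrite -s3 !exprD; ring.
by rewrite -s4 !exprD /h2; ring.
Qed.

Lemma good433 (c : word F n) s L x0 x1 x2 x3 y0 y1 y2 z0 z1 z2 :
  c \in C -> cover s L c ->
  TT L 0 = [:: x0; x1; x2; x3] -> TT L 1 = [:: y0; y1; y2] -> TT L 2 = [:: z0; z1; z2] ->
  lam c * (- (x0 + x1 + x2 + x3) * (w * (y0 + y1 + y2) + w ^+ 2 * (z0 + z1 + z2))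
    - (x0 * x1 + x0 * x2 + x0 * x3 + x1 * x2 + x1 * x3 + x2 * x3)
    + w * h2 y0 y1 y2 + w ^+ 2 * h2 z0 z1 z2) = 0.
Proof.
move=> hc hcov e0 e1 e2.
have [f0 f1 _ _ f34] := cm_facts hc.
have := cover_supp hcov (isT : (0 < 3)%N); rewrite e0 => /rec4 /(_ (f0 _) (f1 _)) b0.
have := cover_supp hcov (isT : (1 < 3)%N); rewrite e1 => /rec3 /(_ (f0 _) (f1 _)) [a1 b1].
have := cover_supp hcov (isT : (2 < 3)%N); rewrite e2 => /rec3 /(_ (f0 _) (f1 _)) [a2 b2].
rewrite !cmrel2 // in b0 a1 b1 a2 b2.
have s3 := f34 3%N isT; have s4 := f34 4%N isT.
rewrite (rel_sum s (fun t => cm t 3 c)) /= a1 a2 in s3.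
rewrite (rel_sum s (fun t => cm t 4 c)) /= b0 b1 b2 in s4.
set nu := cm ((s + 0) %% 3) 3 c in s3 s4.
apply/eqP; rewrite -(mulrI_eq0 _ (lregP (wX_neq0 s))); apply/eqP.
have -> : w ^+ s * (lam c * (- (x0 + x1 + x2 + x3) * (w * (y0 + y1 + y2) + w ^+ 2 * (z0 + z1 + z2))
    - (x0 * x1 + x0 * x2 + x0 * x3 + x1 * x2 + x1 * x3 + x2 * x3)
    + w * h2 y0 y1 y2 + w ^+ 2 * h2 z0 z1 z2)) =
  ((x0 + x1 + x2 + x3) * nu - (x0 * x1 + x0 * x2 + x0 * x3 + x1 * x2 + x1 * x3 + x2 * x3) * (w ^+ (s + 0) * lam c)
   + h2 y0 y1 y2 * (w ^+ (s + 1) * lam c) + h2 z0 z1 z2 * (w ^+ (s + 2) * lam c))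
  - (x0 + x1 + x2 + x3) * (nu + (y0 + y1 + y2) * (w ^+ (s + 1) * lam c) + (z0 + z1 + z2) * (w ^+ (s + 2) * lam c)).
  by rewrite !exprD /h2; ring.
rewrite (_ : (x0 + x1 + x2 + x3) * nu - _ + _ + _ = 0); last by rewrite -s4 /h2; ring.
rewrite (_ : nu + _ + _ = 0); last by rewrite -s3; ring.
by rewrite mulr0 subr0.
Qed.

Lemma small_lam (c : word F n) s L r : c \in C -> cover s L c -> (r < 3)%N ->
  (size (TT L r) <= 2)%N -> lam c = 0.
Proof.
move=> hc hcov hr hsz; have [f0 f1 _ _ _] := cm_facts hc.
have hm : forall j, (j < 2)%N -> cm ((s + r) %% 3) j c = 0.
  by case=> [|[|j]] // _; rewrite ?f0 ?f1.
have Z := @RS _ 2 _ c hm (cover_supp hcov hr) hsz.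
have := cmrel2 s r hc; rewrite zero_class_cm // => /esym /eqP.
by rewrite mulf_eq0 (negbTE (wX_neq0 _)) /= => /eqP.
Qed.

Lemma zero_lam (c : word F n) s L r0 : c \in C -> cover s L c -> lam c = 0 -> (r0 < 3)%N ->
  (size (TT L r0) <= 5)%N -> (forall r, (r < 3)%N -> r != r0 -> (size (TT L r) <= 3)%N) -> c = 0.
Proof.
move=> hc hcov hl hr0 hs0 hs.
have [f0 f1 _ _ f34] := cm_facts hc.
have c2 r : cm ((s + r) %% 3) 2 c = 0 by rewrite cmrel2 // hl mulr0.
have Zr r : (r < 3)%N -> r != r0 -> forall i : 'I_n, (i %% 3 = (s + r) %% 3)%N -> c i = 0.
  move=> hr hne; apply: (@RS _ 3 _ c _ (cover_supp hcov hr) (hs r hr hne)).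
  by case=> [|[|[|j]]] // _; rewrite ?f0 ?f1 ?c2.
have cm0 r j : (r < 3)%N -> r != r0 -> cm ((s + r) %% 3) j c = 0.
  by move=> hr hne; apply: zero_class_cm; exact: Zr.
have c34 j : (j == 3)%N || (j == 4)%N -> cm ((s + r0) %% 3) j c = 0.
  move=> hj; have := f34 j hj; rewrite (rel_sum s (fun t => cm t j c)) /=.
  case: r0 hr0 {hs0 hs Zr} cm0 => [|[|[|r0]]] // _ cm0.
  - by rewrite (cm0 1%N) // (cm0 2%N) // !addr0.
  - by rewrite (cm0 0%N) // (cm0 2%N) // addr0 add0r.
  - by rewrite (cm0 0%N) // (cm0 1%N) // !add0r.
have Z0 : forall i : 'I_n, (i %% 3 = (s + r0) %% 3)%N -> c i = 0.
  apply: (@RS _ 5 _ c _ (cover_supp hcov hr0) hs0).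
  by case=> [|[|[|[|[|j]]]]] // _; rewrite ?f0 ?f1 ?c2 ?c34.
apply/ffunP => i; rewrite ffunE.
pose r := ((i %% 3 + 3 - s %% 3) %% 3)%N.
have hr : (r < 3)%N by rewrite ltn_pmod.
have hir : (i %% 3 = (s + r) %% 3)%N by rewrite /r; lia.
case: (eqVneq r r0) => [e|ne]; first by apply: Z0; rewrite -e.
exact: (Zr r hr ne).
Qed.

Lemma cert_mul (K Wc l D : F) : D = K + (w ^+ 2 + w + 1) * Wc -> l * D = 0 -> l * K = 0.
Proof. by move=> -> ; rewrite hw mul0r addr0. Qed.

Lemma cert2 (K Wc U V l E1 E2 : F) : U * E1 + V * E2 = K + (w ^+ 2 + w + 1) * Wc ->
  l * E1 = 0 -> l * E2 = 0 -> l * K = 0.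
Proof.
move=> e h1 h2; have : l * (U * E1 + V * E2) = U * (l * E1) + V * (l * E2) by ring.
by rewrite h1 h2 !mulr0 addr0 e hw mul0r addr0.
Qed.

Lemma lam_from (c : word F n) (K : F) : K != 0 -> lam c * K = 0 -> lam c = 0.
Proof. by move=> hK /eqP; rewrite mulf_eq0 (negbTE hK) orbF => /eqP. Qed.

Definition L1 s : seq (nat * F) := [seq ((k %% 3)%N, u s + k%:R) | k <- iota 0 10].

Lemma AL1 (c : word F n) s : c \in C ->
  (forall i : 'I_n, c i != 0 -> exists2 k, (k < 10)%N & i = pos (s + k)) -> c = 0.
Proof.
move=> hc H.
have hcov : cover s (L1 s) c.
  move=> i hci; have [k hk ->] := H i hci.
  exists ((k %% 3)%N, u s + k%:R); first by apply/mapP; exists k => //; rewrite mem_iota.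
  by rewrite /= ltn_pmod //= class_mod modnDmr eqxx /= u_mod /u natrD eqxx.
have hD := @good433 c s (L1 s) (u s + 0%:R) (u s + 3%:R) (u s + 6%:R) (u s + 9%:R)
   (u s + 1%:R) (u s + 4%:R) (u s + 7%:R) (u s + 2%:R) (u s + 5%:R) (u s + 8%:R) hc hcov erefl erefl erefl.
have hl : lam c = 0.
  apply: (@lam_from c (3%:R * 2%:R * 2%:R)); first by rewrite !mulf_neq0 ?natF_neq0.
  apply: (@cert_mul _ (- 111%:R - 54%:R * u s - 6%:R * u s ^+ 2) _ _ _ hD); rewrite /h2; ring.
apply: (@zero_lam c s (L1 s) 0 hc hcov hl) => //.
by case=> [|[|[|r]]].
Qed.


Definition L2 s d l1 dl : seq (nat * F) :=
  [seq ((k %% 3)%N, u s + k%:R) | k <- iota 0 l1] ++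
  [seq (((dl + k) %% 3)%N, u s + u d + k%:R) | k <- iota 0 (9 - l1)].

Lemma AL2 (c : word F n) s d l1 : c \in C -> (l1 <= 9)%N ->
  (forall i : 'I_n, c i != 0 -> (exists2 k, (k < l1)%N & i = pos (s + k)) \/
                                 (exists2 k, (k < 9 - l1)%N & i = pos (s + d + k))) -> c = 0.
Proof.
move=> hc hl1 H.
have hcov : cover s (L2 s d l1 (d %% 3)) c.
  move=> i hci; case: (H i hci) => [[k hk ->]|[k hk ->]].
    exists ((k %% 3)%N, u s + k%:R); first by rewrite mem_cat; apply/orP; left; apply/mapP; exists k => //; rewrite mem_iota.
    by rewrite /= ltn_pmod //= class_mod modnDmr eqxx /= u_mod /u natrD eqxx.
  exists (((d %% 3 + k) %% 3)%N, u s + u d + k%:R); first by rewrite mem_cat; apply/orP; right; apply/mapP; exists k => //; rewrite mem_iota.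
  rewrite /= ltn_pmod //= class_mod u_mod /u !natrD eqxx andbT.
  apply/eqP; lia.
move: (d %% 3)%N (ltn_pmod d (isT : (0 < 3)%N)) hcov => dl hdl hcov.
have hl : lam c = 0.
  case: l1 hl1 hcov H => [|[|[|[|[|[|[|[|[|[|l1]]]]]]]]]] // hl1 hcov H;
  case: dl hdl hcov => [|[|[|dl]]] // hdl hcov.
  - have [q1 q2] := @good3 c s _ (u s + u d + 0%:R) (u s + u d + 3%:R) (u s + u d + 6%:R) (u s + u d + 1%:R) (u s + u d + 4%:R) (u s + u d + 7%:R) (u s + u d + 2%:R) (u s + u d + 5%:R) (u s + u d + 8%:R) hc hcov erefl erefl erefl.
    apply: (@lam_from c (3%:R * 3%:R * 3%:R)); first by rewrite !mulf_neq0 ?natF_neq0.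
    apply: (@cert2 _ (- 81%:R - 18%:R * u d - 9%:R * u d * w ^+ 2 - 18%:R * u s - 9%:R * u s * w ^+ 2 + 9%:R * w - 45%:R * w ^+ 2) (- 6%:R - 3%:R * w ^+ 2) 0 _ _ _ _ q1 q2); rewrite /h2; ring.
  - have [q1 q2] := @good3 c s _ (u s + u d + 2%:R) (u s + u d + 5%:R) (u s + u d + 8%:R) (u s + u d + 0%:R) (u s + u d + 3%:R) (u s + u d + 6%:R) (u s + u d + 1%:R) (u s + u d + 4%:R) (u s + u d + 7%:R) hc hcov erefl erefl erefl.
    apply: (@lam_from c (3%:R * 3%:R * 3%:R)); first by rewrite !mulf_neq0 ?natF_neq0.
    apply: (@cert2 _ (18%:R + 9%:R * u d - 9%:R * u d * w ^+ 2 + 9%:R * u s - 9%:R * u s * w ^+ 2 + 9%:R * w - 36%:R * w ^+ 2) (3%:R - 3%:R * w ^+ 2) 0 _ _ _ _ q1 q2); rewrite /h2; ring.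
  - have [q1 q2] := @good3 c s _ (u s + u d + 1%:R) (u s + u d + 4%:R) (u s + u d + 7%:R) (u s + u d + 2%:R) (u s + u d + 5%:R) (u s + u d + 8%:R) (u s + u d + 0%:R) (u s + u d + 3%:R) (u s + u d + 6%:R) hc hcov erefl erefl erefl.
    apply: (@lam_from c (3%:R * 3%:R * 3%:R)); first by rewrite !mulf_neq0 ?natF_neq0.
    apply: (@cert2 _ (9%:R + 9%:R * u d + 18%:R * u d * w ^+ 2 + 9%:R * u s + 18%:R * u s * w ^+ 2 + 36%:R * w + 54%:R * w ^+ 2) (3%:R + 6%:R * w ^+ 2) 0 _ _ _ _ q1 q2); rewrite /h2; ring.
  - exact: (@small_lam c s _ 2 hc hcov).
  - have [q1 q2] := @good3 c s _ (u s + 0%:R) (u s + u d + 2%:R) (u s + u d + 5%:R) (u s + u d + 0%:R) (u s + u d + 3%:R) (u s + u d + 6%:R) (u s + u d + 1%:R) (u s + u d + 4%:R) (u s + u d + 7%:R) hc hcov erefl erefl erefl.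
    apply: (@lam_from c (3%:R * 3%:R * 5%:R * 5%:R)); first by rewrite !mulf_neq0 ?natF_neq0.
    apply: (@cert2 _ (450%:R + 360%:R * u d + 135%:R * u d * u s + 135%:R * u d * w + 45%:R * u d ^+ 2 + 540%:R * u s + 135%:R * u s * w + 90%:R * u s ^+ 2 + 540%:R * w) (180%:R + 45%:R * u d + 60%:R * u s + 45%:R * w) (- 15%:R) _ _ _ _ q1 q2); rewrite /h2; ring.
  - exact: (@small_lam c s _ 1 hc hcov).
  - exact: (@small_lam c s _ 2 hc hcov).
  - exact: (@small_lam c s _ 2 hc hcov).
  - have [q1 q2] := @good3 c s _ (u s + 0%:R) (u s + u d + 1%:R) (u s + u d + 4%:R) (u s + 1%:R) (u s + u d + 2%:R) (u s + u d + 5%:R) (u s + u d + 0%:R) (u s + u d + 3%:R) (u s + u d + 6%:R) hc hcov erefl erefl erefl.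
    apply: (@lam_from c (3%:R * 3%:R)); first by rewrite !mulf_neq0 ?natF_neq0.
    apply: (@cert2 _ (- 81%:R - 54%:R * u d - 27%:R * u d * u s - 54%:R * u d * u s * w - 27%:R * u d * u s * w ^+ 2 - 117%:R * u d * w - 63%:R * u d * w ^+ 2 - 9%:R * u d ^+ 2 - 18%:R * u d ^+ 2 * w - 9%:R * u d ^+ 2 * w ^+ 2 - 81%:R * u s - 171%:R * u s * w - 90%:R * u s * w ^+ 2 - 18%:R * u s ^+ 2 - 36%:R * u s ^+ 2 * w - 18%:R * u s ^+ 2 * w ^+ 2 - 153%:R * w - 81%:R * w ^+ 2) (- 27%:R - 9%:R * u d - 18%:R * u d * w - 9%:R * u d * w ^+ 2 - 12%:R * u s - 24%:R * u s * w - 12%:R * u s * w ^+ 2 - 57%:R * w - 30%:R * w ^+ 2) (3%:R + 6%:R * w + 3%:R * w ^+ 2) _ _ _ _ q1 q2); rewrite /h2; ring.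
  - have [q1 q2] := @good3 c s _ (u s + 0%:R) (u s + u d + 0%:R) (u s + u d + 3%:R) (u s + 1%:R) (u s + u d + 1%:R) (u s + u d + 4%:R) (u s + 2%:R) (u s + u d + 2%:R) (u s + u d + 5%:R) hc hcov erefl erefl erefl.
    apply: (@lam_from c (3%:R * 3%:R * 3%:R)); first by rewrite !mulf_neq0 ?natF_neq0.
    apply: (@cert2 _ (- 45%:R - 12%:R * u d - 6%:R * u d * w ^+ 2 - 18%:R * u s - 9%:R * u s * w ^+ 2 + 9%:R * w - 27%:R * w ^+ 2) (- 6%:R - 3%:R * w ^+ 2) 0 _ _ _ _ q1 q2); rewrite /h2; ring.
  - have [q1 q2] := @good3 c s _ (u s + 0%:R) (u s + u d + 2%:R) (u s + u d + 5%:R) (u s + 1%:R) (u s + u d + 0%:R) (u s + u d + 3%:R) (u s + 2%:R) (u s + u d + 1%:R) (u s + u d + 4%:R) hc hcov erefl erefl erefl.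
    apply: (@lam_from c (3%:R * 3%:R)); first by rewrite !mulf_neq0 ?natF_neq0.
    apply: (@cert2 _ (- 9%:R - 6%:R * u d * w ^+ 2 - 9%:R * u s * w ^+ 2 + 9%:R * w - 21%:R * w ^+ 2) (- 3%:R * w ^+ 2) 0 _ _ _ _ q1 q2); rewrite /h2; ring.
  - have [q1 q2] := @good3 c s _ (u s + 0%:R) (u s + u d + 1%:R) (u s + u d + 4%:R) (u s + 1%:R) (u s + u d + 2%:R) (u s + u d + 5%:R) (u s + 2%:R) (u s + u d + 0%:R) (u s + u d + 3%:R) hc hcov erefl erefl erefl.
    apply: (@lam_from c (3%:R * 3%:R)); first by rewrite !mulf_neq0 ?natF_neq0.
    apply: (@cert2 _ (- 9%:R + 6%:R * u d * w ^+ 2 + 9%:R * u s * w ^+ 2 + 9%:R * w + 15%:R * w ^+ 2) (3%:R * w ^+ 2) 0 _ _ _ _ q1 q2); rewrite /h2; ring.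
  - exact: (@small_lam c s _ 2 hc hcov).
  - have [q1 q2] := @good3 c s _ (u s + 0%:R) (u s + 3%:R) (u s + u d + 2%:R) (u s + 1%:R) (u s + u d + 0%:R) (u s + u d + 3%:R) (u s + 2%:R) (u s + u d + 1%:R) (u s + u d + 4%:R) hc hcov erefl erefl erefl.
    apply: (@lam_from c (2%:R * 2%:R * 3%:R * 3%:R)); first by rewrite !mulf_neq0 ?natF_neq0.
    apply: (@cert2 _ (90%:R + 66%:R * u d + 36%:R * u d * u s + 24%:R * u d * w + 6%:R * u d ^+ 2 + 144%:R * u s + 36%:R * u s * w + 36%:R * u s ^+ 2 + 84%:R * w) (48%:R + 12%:R * u d + 24%:R * u s + 12%:R * w) (- 6%:R) _ _ _ _ q1 q2); rewrite /h2; ring.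
  - exact: (@small_lam c s _ 1 hc hcov).
  - exact: (@small_lam c s _ 2 hc hcov).
  - exact: (@small_lam c s _ 2 hc hcov).
  - have [q1 q2] := @good3 c s _ (u s + 0%:R) (u s + 3%:R) (u s + u d + 1%:R) (u s + 1%:R) (u s + 4%:R) (u s + u d + 2%:R) (u s + 2%:R) (u s + u d + 0%:R) (u s + u d + 3%:R) hc hcov erefl erefl erefl.
    apply: (@lam_from c (2%:R * 2%:R * 3%:R * 3%:R)); first by rewrite !mulf_neq0 ?natF_neq0.
    apply: (@cert2 _ (30%:R + 54%:R * u d + 36%:R * u d * u s + 72%:R * u d * u s * w + 36%:R * u d * u s * w ^+ 2 + 132%:R * u d * w + 78%:R * u d * w ^+ 2 + 6%:R * u d ^+ 2 + 12%:R * u d ^+ 2 * w + 6%:R * u d ^+ 2 * w ^+ 2 + 108%:R * u s + 252%:R * u s * w + 144%:R * u s * w ^+ 2 + 36%:R * u s ^+ 2 + 72%:R * u s ^+ 2 * w + 36%:R * u s ^+ 2 * w ^+ 2 + 192%:R * w + 126%:R * w ^+ 2) (36%:R + 12%:R * u d + 24%:R * u d * w + 12%:R * u d * w ^+ 2 + 24%:R * u s + 48%:R * u s * w + 24%:R * u s * w ^+ 2 + 84%:R * w + 48%:R * w ^+ 2) (- 6%:R - 12%:R * w - 6%:R * w ^+ 2) _ _ _ _ q1 q2); rewrite /h2; ring.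
  - have [q1 q2] := @good3 c s _ (u s + 0%:R) (u s + 3%:R) (u s + u d + 0%:R) (u s + 1%:R) (u s + 4%:R) (u s + u d + 1%:R) (u s + 2%:R) (u s + 5%:R) (u s + u d + 2%:R) hc hcov erefl erefl erefl.
    apply: (@lam_from c (3%:R * 3%:R * 3%:R)); first by rewrite !mulf_neq0 ?natF_neq0.
    apply: (@cert2 _ (- 45%:R - 6%:R * u d - 3%:R * u d * w ^+ 2 - 18%:R * u s - 9%:R * u s * w ^+ 2 + 9%:R * w - 27%:R * w ^+ 2) (- 6%:R - 3%:R * w ^+ 2) 0 _ _ _ _ q1 q2); rewrite /h2; ring.
  - have [q1 q2] := @good3 c s _ (u s + 0%:R) (u s + 3%:R) (u s + u d + 2%:R) (u s + 1%:R) (u s + 4%:R) (u s + u d + 0%:R) (u s + 2%:R) (u s + 5%:R) (u s + u d + 1%:R) hc hcov erefl erefl erefl.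
    apply: (@lam_from c (3%:R * 3%:R)); first by rewrite !mulf_neq0 ?natF_neq0.
    apply: (@cert2 _ (- 24%:R - 3%:R * u d - 3%:R * u d * w ^+ 2 - 9%:R * u s - 9%:R * u s * w ^+ 2 + 9%:R * w - 24%:R * w ^+ 2) (- 3%:R - 3%:R * w ^+ 2) 0 _ _ _ _ q1 q2); rewrite /h2; ring.
  - have [q1 q2] := @good3 c s _ (u s + 0%:R) (u s + 3%:R) (u s + u d + 1%:R) (u s + 1%:R) (u s + 4%:R) (u s + u d + 2%:R) (u s + 2%:R) (u s + 5%:R) (u s + u d + 0%:R) hc hcov erefl erefl erefl.
    apply: (@lam_from c (3%:R * 3%:R)); first by rewrite !mulf_neq0 ?natF_neq0.
    apply: (@cert2 _ (- 21%:R - 3%:R * u d - 9%:R * u s) (- 3%:R) 0 _ _ _ _ q1 q2); rewrite /h2; ring.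
  - exact: (@small_lam c s _ 2 hc hcov).
  - have [q1 q2] := @good3 c s _ (u s + 0%:R) (u s + 3%:R) (u s + 6%:R) (u s + 1%:R) (u s + 4%:R) (u s + u d + 0%:R) (u s + 2%:R) (u s + 5%:R) (u s + u d + 1%:R) hc hcov erefl erefl erefl.
    apply: (@lam_from c (3%:R * 3%:R)); first by rewrite !mulf_neq0 ?natF_neq0.
    apply: (@cert2 _ (- 90%:R - 27%:R * u d - 9%:R * u d * u s - 3%:R * u d * w - 90%:R * u s - 9%:R * u s * w - 18%:R * u s ^+ 2 - 24%:R * w) (- 30%:R - 3%:R * u d - 12%:R * u s - 3%:R * w) (3%:R) _ _ _ _ q1 q2); rewrite /h2; ring.
  - exact: (@small_lam c s _ 1 hc hcov).
  - exact: (@small_lam c s _ 2 hc hcov).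
  - exact: (@small_lam c s _ 2 hc hcov).
  - have [q1 q2] := @good3 c s _ (u s + 0%:R) (u s + 3%:R) (u s + 6%:R) (u s + 1%:R) (u s + 4%:R) (u s + 7%:R) (u s + 2%:R) (u s + 5%:R) (u s + u d + 0%:R) hc hcov erefl erefl erefl.
    apply: (@lam_from c (3%:R * 3%:R * 5%:R * 5%:R)); first by rewrite !mulf_neq0 ?natF_neq0.
    apply: (@cert2 _ (45%:R + 135%:R * u d + 45%:R * u d * u s + 90%:R * u d * u s * w + 45%:R * u d * u s * w ^+ 2 + 315%:R * u d * w + 180%:R * u d * w ^+ 2 + 405%:R * u s + 945%:R * u s * w + 540%:R * u s * w ^+ 2 + 90%:R * u s ^+ 2 + 180%:R * u s ^+ 2 * w + 90%:R * u s ^+ 2 * w ^+ 2 + 945%:R * w + 675%:R * w ^+ 2) (135%:R + 15%:R * u d + 30%:R * u d * w + 15%:R * u d * w ^+ 2 + 60%:R * u s + 120%:R * u s * w + 60%:R * u s * w ^+ 2 + 315%:R * w + 180%:R * w ^+ 2) (- 15%:R - 30%:R * w - 15%:R * w ^+ 2) _ _ _ _ q1 q2); rewrite /h2; ring.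
  - have [q1 q2] := @good3 c s _ (u s + 0%:R) (u s + 3%:R) (u s + 6%:R) (u s + 1%:R) (u s + 4%:R) (u s + 7%:R) (u s + 2%:R) (u s + 5%:R) (u s + 8%:R) hc hcov erefl erefl erefl.
    apply: (@lam_from c (3%:R * 3%:R * 3%:R)); first by rewrite !mulf_neq0 ?natF_neq0.
    apply: (@cert2 _ (- 81%:R - 18%:R * u s - 9%:R * u s * w ^+ 2 + 9%:R * w - 45%:R * w ^+ 2) (- 6%:R - 3%:R * w ^+ 2) 0 _ _ _ _ q1 q2); rewrite /h2; ring.
  - have [q1 q2] := @good3 c s _ (u s + 0%:R) (u s + 3%:R) (u s + 6%:R) (u s + 1%:R) (u s + 4%:R) (u s + 7%:R) (u s + 2%:R) (u s + 5%:R) (u s + 8%:R) hc hcov erefl erefl erefl.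
    apply: (@lam_from c (3%:R * 3%:R * 3%:R)); first by rewrite !mulf_neq0 ?natF_neq0.
    apply: (@cert2 _ (- 81%:R - 18%:R * u s - 9%:R * u s * w ^+ 2 + 9%:R * w - 45%:R * w ^+ 2) (- 6%:R - 3%:R * w ^+ 2) 0 _ _ _ _ q1 q2); rewrite /h2; ring.
  - have [q1 q2] := @good3 c s _ (u s + 0%:R) (u s + 3%:R) (u s + 6%:R) (u s + 1%:R) (u s + 4%:R) (u s + 7%:R) (u s + 2%:R) (u s + 5%:R) (u s + 8%:R) hc hcov erefl erefl erefl.
    apply: (@lam_from c (3%:R * 3%:R * 3%:R)); first by rewrite !mulf_neq0 ?natF_neq0.
    apply: (@cert2 _ (- 81%:R - 18%:R * u s - 9%:R * u s * w ^+ 2 + 9%:R * w - 45%:R * w ^+ 2) (- 6%:R - 3%:R * w ^+ 2) 0 _ _ _ _ q1 q2); rewrite /h2; ring.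
case: l1 hl1 hcov H => [|[|[|[|[|[|[|[|[|[|l1]]]]]]]]]] // hl1 hcov H;
  case: dl hdl hcov => [|[|[|dl]]] // hdl hcov.
  - by apply: (@zero_lam c s _ 0 hc hcov hl) => //; case=> [|[|[|r]]].
  - by apply: (@zero_lam c s _ 0 hc hcov hl) => //; case=> [|[|[|r]]].
  - by apply: (@zero_lam c s _ 0 hc hcov hl) => //; case=> [|[|[|r]]].
  - by apply: (@zero_lam c s _ 0 hc hcov hl) => //; case=> [|[|[|r]]].
  - by apply: (@zero_lam c s _ 0 hc hcov hl) => //; case=> [|[|[|r]]].
  - by apply: (@zero_lam c s _ 0 hc hcov hl) => //; case=> [|[|[|r]]].
  - by apply: (@zero_lam c s _ 0 hc hcov hl) => //; case=> [|[|[|r]]].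
  - by apply: (@zero_lam c s _ 1 hc hcov hl) => //; case=> [|[|[|r]]].
  - by apply: (@zero_lam c s _ 0 hc hcov hl) => //; case=> [|[|[|r]]].
  - by apply: (@zero_lam c s _ 0 hc hcov hl) => //; case=> [|[|[|r]]].
  - by apply: (@zero_lam c s _ 0 hc hcov hl) => //; case=> [|[|[|r]]].
  - by apply: (@zero_lam c s _ 0 hc hcov hl) => //; case=> [|[|[|r]]].
  - by apply: (@zero_lam c s _ 0 hc hcov hl) => //; case=> [|[|[|r]]].
  - by apply: (@zero_lam c s _ 0 hc hcov hl) => //; case=> [|[|[|r]]].
  - by apply: (@zero_lam c s _ 0 hc hcov hl) => //; case=> [|[|[|r]]].
  - by apply: (@zero_lam c s _ 0 hc hcov hl) => //; case=> [|[|[|r]]].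
  - by apply: (@zero_lam c s _ 1 hc hcov hl) => //; case=> [|[|[|r]]].
  - by apply: (@zero_lam c s _ 0 hc hcov hl) => //; case=> [|[|[|r]]].
  - by apply: (@zero_lam c s _ 0 hc hcov hl) => //; case=> [|[|[|r]]].
  - by apply: (@zero_lam c s _ 0 hc hcov hl) => //; case=> [|[|[|r]]].
  - by apply: (@zero_lam c s _ 0 hc hcov hl) => //; case=> [|[|[|r]]].
  - by apply: (@zero_lam c s _ 0 hc hcov hl) => //; case=> [|[|[|r]]].
  - by apply: (@zero_lam c s _ 0 hc hcov hl) => //; case=> [|[|[|r]]].
  - by apply: (@zero_lam c s _ 0 hc hcov hl) => //; case=> [|[|[|r]]].
  - by apply: (@zero_lam c s _ 0 hc hcov hl) => //; case=> [|[|[|r]]].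
  - by apply: (@zero_lam c s _ 1 hc hcov hl) => //; case=> [|[|[|r]]].
  - by apply: (@zero_lam c s _ 0 hc hcov hl) => //; case=> [|[|[|r]]].
  - by apply: (@zero_lam c s _ 0 hc hcov hl) => //; case=> [|[|[|r]]].
  - by apply: (@zero_lam c s _ 0 hc hcov hl) => //; case=> [|[|[|r]]].
  - by apply: (@zero_lam c s _ 0 hc hcov hl) => //; case=> [|[|[|r]]].
Qed.


Definition Sx (c : word F n) := [set i : 'I_n | c i != 0].
Definition Pre (c : word F n) := [set i : 'I_n | (c i == 0) && (c (ordS i) != 0)].
Definition Pw (c : word F n) := #|[set i : 'I_n | (c i != 0) || (c (ordS i) != 0)]|.

Lemma Pw_split c : Pw c = (#|Sx c| + #|Pre c|)%N.
Proof.
rewrite /Pw (_ : [set i | _] = Sx c :|: Pre c); last first.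
  by apply/setP => i; rewrite !inE; case: (eqVneq (c i) 0).
rewrite cardsU (_ : Sx c :&: Pre c = set0) ?cards0 ?subn0 //.
by apply/setP => i; rewrite !inE; case: (eqVneq (c i) 0).
Qed.

Lemma cls_ordS (i : 'I_n) : (ordS i %% 3 = (i + 1) %% 3)%N.
Proof. by rewrite /= class_mod addn1. Qed.
Lemma cls_pred (i : 'I_n) : (ord_pred i %% 3 = (i + 2) %% 3)%N.
Proof. rewrite /= class_mod; have := n_gt0; lia. Qed.

Lemma comb1 (c : word F n) t : (forall i : 'I_n, (i %% 3 != t)%N -> c i = 0) -> (2 * #|Sx c| <= Pw c)%N.
Proof.
move=> h; rewrite Pw_split.
suff : (#|Sx c| <= #|Pre c|)%N by lia.
rewrite -(card_imset (Sx c) (@ord_pred_inj n)).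
apply: subset_leq_card; apply/subsetP => _ /imsetP [i hi ->].
rewrite inE in hi; rewrite !inE ord_predK hi andbT.
case: (eqVneq (i %% 3)%N t) => [hit|hne]; last by rewrite h ?eqxx in hi.
apply/eqP/h; rewrite cls_pred; apply/eqP; lia.
Qed.

Lemma comb2 (c : word F n) t0 : (t0 < 3)%N -> (forall i : 'I_n, (i %% 3 = t0)%N -> c i = 0) ->
  (#|Sx c| <= 2 * #|Pre c|)%N.
Proof.
move=> ht0 h.
pose D := [set i : 'I_n | c (ord_pred i) == 0].
rewrite -(cardsID D (Sx c)).
have h1 : (#|Sx c :&: D| <= #|Pre c|)%N.
  rewrite -(card_imset (Sx c :&: D) (@ord_pred_inj n)).
  apply: subset_leq_card; apply/subsetP => _ /imsetP [i hi ->].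
  by move: hi; rewrite !inE ord_predK => /andP [-> ->].
have h2 : (#|Sx c :\: D| <= #|Pre c|)%N.
  have inj2 : injective (fun i : 'I_n => ord_pred (ord_pred i)).
    by move=> a b /ord_pred_inj /ord_pred_inj.
  rewrite -(card_imset (Sx c :\: D) inj2).
  apply: subset_leq_card; apply/subsetP => _ /imsetP [i hi ->].
  move: hi; rewrite !inE ord_predK => /andP [hpi hi].
  rewrite hpi andbT; apply/eqP/h.
  case: (eqVneq (i %% 3)%N t0) => [e|ne1]; first by rewrite h in hi.
  case: (eqVneq (ord_pred i %% 3)%N t0) => [e|ne2]; first by rewrite h in hpi.
  have f1 := cls_pred i; have f2 := cls_pred (ord_pred i).
  rewrite f2; move: ne1 ne2; rewrite f1 => /eqP ne1 /eqP ne2; lia.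
lia.
Qed.

Definition Lr (c : word F n) (x : 'I_n) : nat :=
  ex_minn (P := fun k => (c (pos (x + 1 + k)) == 0) || (n <= k)%N)
    (ex_intro _ n (introT orP (or_intror (leqnn n)))).

Lemma Lr_spec (c : word F n) x : forall k, (k < Lr c x)%N -> c (pos (x + 1 + k)) != 0.
Proof.
rewrite /Lr; case: ex_minnP => m hm hmin k hk; apply/negP => hz.
by have := hmin k; rewrite hz /= => /(_ isT); lia.
Qed.

Lemma Lr_lt (c : word F n) (x : 'I_n) : c x = 0 -> (Lr c x < n)%N.
Proof.
move=> hx; rewrite /Lr; case: ex_minnP => m hm hmin.
have := hmin (n - 1)%N; rewrite (_ : pos (x + 1 + (n - 1)) = x).
  by rewrite hx eqxx /= => /(_ isT); have := n_gt0; lia.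
apply: val_inj; rewrite /= (_ : (x + 1 + (n - 1) = x + n)%N); last by have := n_gt0; lia.
by rewrite modnDr modn_small.
Qed.

Lemma pos_eq a b : (pos a = pos b) <-> (a = b %[mod n])%N.
Proof. by split => [/(congr1 val)|e] //; apply: val_inj. Qed.

Lemma run_inj (x : 'I_n) a b : (a < n)%N -> (b < n)%N -> pos (x + 1 + a) = pos (x + 1 + b) -> a = b.
Proof.
move=> ha hb /pos_eq /eqP; rewrite eqn_modDl !modn_small // => /eqP //.
Qed.


Lemma Lr_zero (c : word F n) (x : 'I_n) : c x = 0 -> c (pos (x + 1 + Lr c x)) = 0.
Proof.
move=> hx; have := Lr_lt hx; rewrite /Lr; case: ex_minnP => m hm _ hl.
by move: hm; rewrite leqNgt hl orbF => /eqP.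
Qed.

Lemma Pre0 (c : word F n) x : x \in Pre c -> c x = 0.
Proof. by rewrite inE => /andP [/eqP]. Qed.

Lemma run_cover (c : word F n) (q i : 'I_n) : c q = 0 -> c i != 0 ->
  exists2 x, x \in Pre c & exists2 k, (k < Lr c x)%N & i = pos (x + 1 + k).
Proof.
move=> hq hi.
pose m0 := ((i + n - q) %% n)%N.
have hm0 : pos (q + m0) = i.
  apply: val_inj => /=; rewrite /m0 modnDmr.
  rewrite (_ : (q + (i + n - q) = i + n)%N); last by have := ltn_ord q; lia.
  by rewrite modnDr modn_small.
pose K k := (k <= m0)%N && (c (pos (q + k)) == 0).
have exK : exists k, K k by exists 0%N; rewrite /K leq0n addn0 pos_val hq eqxx.
have ubK : forall k, K k -> (k <= m0)%N by move=> k /andP [].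
case: (ex_maxnP exK ubK) => k1 /andP [hk1 hz] hmax.
have hk1m : (k1 < m0)%N.
  rewrite ltn_neqAle hk1 andbT; apply/eqP => e; move: hz; rewrite e hm0.
  by rewrite (negbTE hi).
have hx : pos (q + k1) \in Pre c.
  rewrite inE hz /= ordS_pos -addnS; apply/negP => h.
  by have := hmax k1.+1; rewrite /K h andbT hk1m => /(_ isT); rewrite ltnn.
exists (pos (q + k1)) => //.
exists (m0 - k1 - 1)%N.
  rewrite ltnNge; apply/negP => hle.
  have := Lr_zero (Pre0 hx); rewrite -addnA pos_addl -!addnA => hz2.
  have := hmax (k1 + (1 + Lr c (pos (q + k1))))%N.
  rewrite /K hz2 eqxx andbT (_ : (k1 + (1 + Lr c (pos (q + k1))) <= m0)%N); last by lia.
  by move=> /(_ isT); lia.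
by rewrite -addnA pos_addl -hm0; congr pos; lia.
Qed.

Lemma run_disj (c : word F n) (x y : 'I_n) a b : x \in Pre c -> y \in Pre c -> x != y ->
  (a < Lr c x)%N -> (b < Lr c y)%N -> pos (x + 1 + a) != pos (y + 1 + b).
Proof.
wlog hab : x y a b / (a <= b)%N.
  move=> W hx hy hxy ha hb; case: (leqP a b) => h; first exact: W.
  by rewrite eq_sym; apply: W => //; [exact: ltnW | rewrite eq_sym].
move=> hx hy hxy ha hb; apply/eqP => /pos_eq /eqP e.
have e2 : (x == y + (b - a) %[mod n])%N.
  move: e; rewrite (_ : (y + 1 + b = y + (b - a) + (1 + a))%N); last by lia.
  by rewrite -(addnA x) eqn_modDr.
have hxv : x = pos (y + (b - a)) by apply: val_inj; rewrite /= -(eqP e2) modn_small.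
have hx0 := Pre0 hx.
case: (posnP (b - a)%N) => hba.
  by rewrite hba addn0 pos_val in hxv; rewrite hxv eqxx in hxy.
have hk : (b - a - 1 < Lr c y)%N by move: hba hb; clear; lia.
have := @Lr_spec c y (b - a - 1)%N hk; rewrite (_ : (y + 1 + (b - a - 1) = y + (b - a))%N); last by move: hba; clear; lia.
by rewrite -hxv hx0 eqxx.
Qed.

Lemma S_split (c : word F n) : #|Sx c| = (#|clsS 0 c| + #|clsS 1 c| + #|clsS 2 c|)%N.
Proof.
rewrite -(cardsID [set i : 'I_n | (i %% 3 == 0)%N] (Sx c)).
rewrite -(cardsID [set i : 'I_n | (i %% 3 == 1)%N] (Sx c :\: _)).
have e0 : Sx c :&: [set i : 'I_n | (i %% 3 == 0)%N] = clsS 0 c.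
  by apply/setP => i; rewrite !inE andbC.
have e1 : (Sx c :\: [set i : 'I_n | (i %% 3 == 0)%N]) :&: [set i : 'I_n | (i %% 3 == 1)%N] = clsS 1 c.
  by apply/setP => i; rewrite !inE; case: (i %% 3)%N => [|[|[|?]]]; rewrite /= ?andbT ?andbF.
have e2 : (Sx c :\: [set i : 'I_n | (i %% 3 == 0)%N]) :\: [set i : 'I_n | (i %% 3 == 1)%N] = clsS 2 c.
  apply/setP => i; rewrite !inE; have : (i %% 3 < 3)%N by rewrite ltn_pmod.
  by case: (i %% 3)%N => [|[|[|?]]] //= _; rewrite ?andbT ?andbF.
by rewrite e0 e1 e2 addnA.
Qed.

Lemma perm3 (f : nat -> nat) t0 t1 t2 : (t0 < 3)%N -> (t1 < 3)%N -> (t2 < 3)%N ->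
  t0 != t1 -> t0 != t2 -> t1 != t2 -> (f 0 + f 1 + f 2 = f t0 + f t1 + f t2)%N.
Proof.
by case: t0 => [|[|[|?]]] //; case: t1 => [|[|[|?]]] //; case: t2 => [|[|[|?]]] // *; lia.
Qed.

Lemma perm3F (f : nat -> F) t0 t1 t2 : (t0 < 3)%N -> (t1 < 3)%N -> (t2 < 3)%N ->
  t0 != t1 -> t0 != t2 -> t1 != t2 -> f 0%N + f 1%N + f 2%N = f t0 + f t1 + f t2.
Proof.
by case: t0 => [|[|[|?]]] //; case: t1 => [|[|[|?]]] //; case: t2 => [|[|[|?]]] // *; ring.
Qed.

Lemma Lr_le (c : word F n) x : x \in Pre c -> (Lr c x <= #|Sx c|)%N.
Proof.
move=> hx; have hl := Lr_lt (Pre0 hx).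
pose s := [seq pos (x + 1 + k) | k <- iota 0 (Lr c x)].
have us : uniq s.
  rewrite map_inj_in_uniq ?iota_uniq // => a b; rewrite !mem_iota !add0n => ha hb.
  by apply: run_inj; lia.
have -> : Lr c x = size s by rewrite size_map size_iota.
rewrite -(card_uniqP us); apply: subset_leq_card; apply/subsetP => _ /mapP [k hk ->].
by rewrite inE; apply: Lr_spec; move: hk; rewrite mem_iota add0n => /andP [].
Qed.

Lemma Lr_le2 (c : word F n) x y : x \in Pre c -> y \in Pre c -> x != y ->
  (Lr c x + Lr c y <= #|Sx c|)%N.
Proof.
move=> hx hy hxy; have hlx := Lr_lt (Pre0 hx); have hly := Lr_lt (Pre0 hy).
pose sx := [seq pos (x + 1 + k) | k <- iota 0 (Lr c x)].
pose sy := [seq pos (y + 1 + k) | k <- iota 0 (Lr c y)].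
have usx : uniq sx.
  rewrite map_inj_in_uniq ?iota_uniq // => a b; rewrite !mem_iota !add0n => ha hb.
  by apply: run_inj; lia.
have usy : uniq sy.
  rewrite map_inj_in_uniq ?iota_uniq // => a b; rewrite !mem_iota !add0n => ha hb.
  by apply: run_inj; lia.
have us : uniq (sx ++ sy).
  rewrite cat_uniq usx usy andbT; apply/hasPn => _ /mapP [b hb ->].
  apply/mapP => [[a ha e]]; move: ha hb; rewrite !mem_iota !add0n => /andP [_ ha] /andP [_ hb].
  by have := run_disj hx hy hxy ha hb; rewrite e eqxx.
have -> : (Lr c x + Lr c y = size (sx ++ sy))%N by rewrite size_cat !size_map !size_iota.
rewrite -(card_uniqP us); apply: subset_leq_card; apply/subsetP => z.
rewrite mem_cat => /orP [] /mapP [k hk ->]; rewrite inE; apply: Lr_spec;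
  by move: hk; rewrite mem_iota add0n => /andP [].
Qed.

Definition Zc (c : word F n) t := forall i : 'I_n, (i %% 3 = t)%N -> c i = 0.
Definition NZc (c : word F n) t := exists i : 'I_n, (i %% 3 = t)%N /\ c i != 0.

Lemma class_zero_card (c : word F n) t : Zc c t -> #|clsS t c| = 0%N.
Proof.
move=> h; apply: eq_card0 => i; rewrite inE.
by case: (eqVneq (i %% 3)%N t) => [e|ne] //=; rewrite h // eqxx.
Qed.

Lemma lam0_of (c : word F n) t : c \in C -> (t < 3)%N -> Zc c t -> lam c = 0.
Proof.
move=> hc ht z; have := zero_class_cm 2 z; rewrite cm2_lam // => /eqP.
by rewrite mulf_eq0 (negbTE (wX_neq0 _)) => /eqP.
Qed.

Lemma caseA1 (c : word F n) t0 t1 t2 : (t0 < 3)%N -> (t1 < 3)%N -> (t2 < 3)%N ->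
  t0 != t1 -> t0 != t2 -> t1 != t2 -> c \in C -> Zc c t1 -> Zc c t2 -> NZc c t0 ->
  (12 <= Pw c)%N.
Proof.
move=> h0 h1 h2 d01 d02 d12 hc z1 z2 nz0.
have [f0 f1 _ _ f34] := cm_facts hc.
have hl := lam0_of hc h1 z1.
have cm34 j : (j == 3)%N || (j == 4)%N -> cm t0 j c = 0.
  move=> hj; have := f34 j hj.
  rewrite (perm3F (fun t => cm t j c) h0 h1 h2 d01 d02 d12) /=.
  by rewrite (zero_class_cm j z1) (zero_class_cm j z2) !addr0.
have big : (5 < #|clsS t0 c|)%N.
  apply: class_size nz0; case=> [|[|[|[|[|j]]]]] hj;
    [exact: f0|exact: f1|by rewrite cm2_lam // hl mulr0|exact: cm34|exact: cm34|by []].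
have hS : #|Sx c| = #|clsS t0 c|.
  rewrite S_split (perm3 (fun t => #|clsS t c|) h0 h1 h2 d01 d02 d12) /=.
  by rewrite (class_zero_card z1) (class_zero_card z2) !addn0.
have hc1 : forall i : 'I_n, (i %% 3 != t0)%N -> c i = 0.
  move=> i hi; have : (i %% 3 < 3)%N by rewrite ltn_pmod.
  case: (eqVneq (i %% 3)%N t1) => [e1|n1]; first by move=> _; exact: z1.
  case: (eqVneq (i %% 3)%N t2) => [e2|n2]; first by move=> _; exact: z2.
  by move: hi n1 n2 d01 d02 d12 => /eqP ? /eqP ? /eqP ? /eqP ? /eqP ? /eqP ? ?; lia.
have := comb1 hc1; rewrite hS; lia.
Qed.

Lemma caseA2 (c : word F n) t0 t1 t2 : (t0 < 3)%N -> (t1 < 3)%N -> (t2 < 3)%N ->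
  t0 != t1 -> t0 != t2 -> t1 != t2 -> c \in C -> Zc c t0 -> NZc c t1 -> NZc c t2 ->
  (12 <= Pw c)%N.
Proof.
move=> h0 h1 h2 d01 d02 d12 hc z0 nz1 nz2.
have [f0 f1 _ _ _] := cm_facts hc.
have hl := lam0_of hc h0 z0.
have sz t : (t < 3)%N -> NZc c t -> (3 < #|clsS t c|)%N.
  move=> ht nz; apply: class_size nz; case=> [|[|[|j]]] hj;
    [exact: f0|exact: f1|by rewrite cm2_lam // hl mulr0|by []].
have s1 := sz t1 h1 nz1; have s2 := sz t2 h2 nz2.
have hS : #|Sx c| = (#|clsS t1 c| + #|clsS t2 c|)%N.
  rewrite S_split (perm3 (fun t => #|clsS t c|) h0 h1 h2 d01 d02 d12) /=.
  by rewrite (class_zero_card z0).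
have := comb2 h0 z0; rewrite Pw_split hS; lia.
Qed.

Lemma caseB (c : word F n) : c \in C -> c != 0 -> NZc c 0 -> NZc c 1 -> NZc c 2 -> (12 <= Pw c)%N.
Proof.
move=> hc hnz n0 n1 n2.
have [f0 f1 _ _ _] := cm_facts hc.
have sz t : NZc c t -> (2 < #|clsS t c|)%N.
  by move=> nz; apply: class_size nz; case=> [|[|j]] hj; [exact: f0|exact: f1|by []].
have hS := S_split c.
have s0 := sz 0%N n0; have s1 := sz 1%N n1; have s2 := sz 2%N n2.
rewrite Pw_split; case: (leqP 12 (#|Sx c| + #|Pre c|)) => // hsm; exfalso.
have [q hq] : exists q : 'I_n, c q = 0.
  case: (pickP [pred q : 'I_n | c q == 0]) => [q /eqP hq|hall]; first by exists q.
  have hT : Sx c = setT by apply/setP => i; rewrite !inE; have := hall i; rewrite /= => /negbT.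
  by move: hsm; rewrite hT cardsT card_ord; have := p5; lia.
have [i0 [_ hi0]] := n0.
have [x0 hx0 _] := run_cover hq hi0.
have hP1 : (0 < #|Pre c|)%N by rewrite card_gt0; apply/set0Pn; exists x0.
have hc0 : c = 0 -> False by move=> e; rewrite e eqxx in hnz.
case E: #|Pre c| => [|[|[|k]]]; first by rewrite E in hP1.
- move/eqP: (E) => /cards1P [x hxe].
  have hx : x \in Pre c by rewrite hxe inE.
  have hle := Lr_le hx.
  apply: hc0; apply: (@AL1 c (x + 1)%N hc) => i hi.
  have [x' hx' [k hk ->]] := run_cover hq hi.
  move: hx' hk; rewrite hxe inE => /eqP -> hk.
  by exists k => //; move: hle hk hsm hS; rewrite E; clear; lia.
- move/eqP: (E) => /cards2P [x [y [hxy hxye]]].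
  have hx : x \in Pre c by rewrite hxye !inE eqxx.
  have hy : y \in Pre c by rewrite hxye !inE eqxx orbT.
  have hle := Lr_le2 hx hy hxy.
  apply: hc0; apply: (@AL2 c (x + 1)%N ((y + n - x) %% n)%N (Lr c x) hc).
    by move: hle hsm hS; rewrite E; clear; lia.
  move=> i hi; have [x' hx' [k hk ->]] := run_cover hq hi.
  move: hx' hk; rewrite hxye !inE => /orP [] /eqP -> hk.
    by left; exists k.
  right; exists k; first by move: hle hk hsm hS; rewrite E; clear; lia.
  apply/pos_eq.
  rewrite (_ : (x + 1 + (y + n - x) %% n + k = (x + 1 + k) + (y + n - x) %% n)%N); last by rewrite addnAC.
  rewrite modnDmr (_ : (x + 1 + k + (y + n - x) = (y + 1 + k) + n)%N); last by have := ltn_ord x; clear; lia.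
  by rewrite modnDr.
- by move: hsm hS s0 s1 s2; rewrite E; clear; lia.
Qed.

Lemma lower (c : word F n) : c \in C -> c != 0 -> (12 <= Pw c)%N.
Proof.
move=> hc hnz.
have dec t : Zc c t \/ NZc c t.
  case: (boolP [forall i : 'I_n, (i %% 3 == t)%N ==> (c i == 0)]) => h.
    by left => i hi; apply/eqP; move: (forallP h i); rewrite hi eqxx.
  by right; move/forallPn: h => [i]; rewrite negb_imply => /andP [/eqP hi hci]; exists i.
case: (dec 0%N) => [z0|n0]; case: (dec 1%N) => [z1|n1]; case: (dec 2%N) => [z2|n2].
- exfalso; move/eqP: hnz; apply; apply/ffunP => i; rewrite ffunE.
  have : (i %% 3 < 3)%N by rewrite ltn_pmod.
  by case E: (i %% 3)%N => [|[|[|k]]] // _; [exact: z0|exact: z1|exact: z2].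
- exact: (@caseA1 c 2 0 1).
- exact: (@caseA1 c 1 0 2).
- exact: (@caseA2 c 0 1 2).
- exact: (@caseA1 c 0 1 2).
- exact: (@caseA2 c 1 0 2).
- exact: (@caseA2 c 2 0 1).
- exact: caseB.
Qed.

Lemma mom_lin k j (x y : word F n) : mom k j (x - y) = mom k j x - mom k j y.
Proof. by rewrite /mom -sumrB; apply: eq_bigr => i _; rewrite !ffunE; ring. Qed.
Lemma mom_add k j (x y : word F n) : mom k j (x + y) = mom k j x + mom k j y.
Proof. by rewrite /mom -big_split /=; apply: eq_bigr => i _; rewrite !ffunE; ring. Qed.

Lemma mvecB (x y : word F n) : mvec (x - y) = mvec x - mvec y.
Proof. by apply/ffunP => l; rewrite !ffunE mom_lin. Qed.
Lemma mvecD (x y : word F n) : mvec (x + y) = mvec x + mvec y.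
Proof. by apply/ffunP => l; rewrite !ffunE mom_add. Qed.

Lemma CB (x y : word F n) : x \in C -> y \in C -> x - y \in C.
Proof. by rewrite !inE mvecB => /eqP -> /eqP ->; rewrite subrr. Qed.

Lemma C0 : (0 : word F n) \in C.
Proof. by rewrite inE; apply/eqP/ffunP => l; rewrite !ffunE /mom big1 // => i _; rewrite ffunE !mul0r. Qed.

Lemma pair_dist_Pw (x y : word F n) : pair_dist x y = Pw (x - y).
Proof. by rewrite /pair_dist /Pw; apply: eq_card => i; rewrite !inE !ffunE !subr_eq0. Qed.

Lemma n10 : (10 <= n)%N. Proof. have := p5; lia. Qed.
Local Notation m := (n - 10)%N.
Lemma mn : (m <= n)%N. Proof. exact: leq_subr. Qed.

Lemma tail_zero (c : word F n) : c \in C -> (forall i : 'I_n, (i < m)%N -> c i = 0) -> c = 0.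
Proof.
move=> hc h; apply: (@AL1 c m hc) => i hi.
have him : (m <= i)%N by rewrite leqNgt; apply/negP => /h; apply/eqP.
exists (i - m)%N; first by have := ltn_ord i; have := n10; lia.
by rewrite subnKC // pos_val.
Qed.

Definition rho (c : word F n) : {ffun 'I_m -> F} := [ffun j => c (widen_ord mn j)].
Definition ext (v : {ffun 'I_m -> F}) : word F n :=
  [ffun i : 'I_n => (if @insub _ (fun k => (k < m)%N) 'I_m (val i) is Some j then v j else 0 : F)].
Definition place (z : {ffun 'I_10 -> F}) : word F n :=
  [ffun i : 'I_n => if (m <= i)%N then z (inord (i - m)) else 0].

Lemma rho_inj (x y : word F n) : x \in C -> y \in C -> rho x = rho y -> x = y.
Proof.
move=> hx hy e; apply/eqP; rewrite -subr_eq0; apply/eqP; apply: tail_zero; first exact: CB.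
move=> i hi; rewrite ffunE; have := congr1 (fun f : {ffun 'I_m -> F} => f (Ordinal hi)) e.
rewrite !ffunE (_ : widen_ord mn (Ordinal hi) = i); last by apply: val_inj.
by move=> ->; rewrite subrr.
Qed.

Lemma place_inj : injective (fun z => mvec (place z)).
Proof.
move=> z1 z2 /= e.
have hc : place z1 - place z2 \in C by rewrite inE mvecB e subrr.
have hz : place z1 - place z2 = 0.
  apply: (@tail_zero (place z1 - place z2) hc) => i hi.
  by rewrite !ffunE leqNgt hi /= subrr.
apply/ffunP => k.
have hk : (m + k < n)%N by have := ltn_ord k; have := n10; lia.
have := congr1 (fun f : word F n => f (Ordinal hk)) hz.
by rewrite !ffunE /= leq_addr addKn inord_val => /eqP; rewrite subr_eq0 => /eqP.
Qed.

Lemma surj (v : {ffun 'I_m -> F}) : exists2 c, c \in C & rho c = v.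
Proof.
have [z hz] : exists z, mvec (place z) = - mvec (ext v).
  have := inj_card_onto place_inj (leqnn _) (- mvec (ext v)).
  by move=> /codomP [z ->]; exists z.
exists (ext v + place z); first by rewrite inE mvecD hz addrN.
apply/ffunP => j; rewrite !ffunE /= leqNgt ltn_ord /= addr0.
by rewrite valK.
Qed.

Lemma card_C : #|C| = (p ^ m)%N.
Proof.
rewrite -(@card_in_imset _ _ rho C); last by move=> x y hx hy; apply: rho_inj.
have -> : [set rho c | c in C] = setT.
  by apply/setP => v; rewrite inE; have [c hc <-] := surj v; exact: imset_f.
by rewrite cardsT card_ffun !card_ord (Fp_cast hp).
Qed.

Lemma exists12 : exists x y, [/\ x \in C, y \in C, x != y & pair_dist x y = 12%N].
Proof.
have hm1 : (m - 1 < m)%N by have := p5; lia.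
pose j0 : 'I_m := Ordinal hm1.
pose v : {ffun 'I_m -> F} := [ffun j => if j == j0 then 1 else 0].
have [c hc hv] := surj v.
have cz : forall i : 'I_n, (i < m - 1)%N -> c i = 0.
  move=> i hi; have him : (i < m)%N by lia.
  have := congr1 (fun f : {ffun 'I_m -> F} => f (Ordinal him)) hv.
  rewrite !ffunE (_ : widen_ord mn (Ordinal him) = i); last by apply: val_inj.
  move=> ->; case: eqP => // /(congr1 val) /= e; lia.
have cnz : c != 0.
  apply/eqP => e; have := congr1 (fun f : {ffun 'I_m -> F} => f j0) hv.
  by rewrite e !ffunE eqxx => /esym /eqP; rewrite oner_eq0.
exists c, 0; split; [done|exact: C0|done|].
rewrite pair_dist_Pw subr0; apply/eqP; rewrite eqn_leq lower // andbT.
have H : (#|[set pos (m - 2 + k) | k : 'I_12]| <= 12)%N.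
  by rewrite (leq_trans (leq_imset_card _ _)) // card_ord.
rewrite /Pw; apply: (leq_trans _ H).
  apply: subset_leq_card; apply/subsetP => i; rewrite inE => hi.
  have hi2 : (m - 2 <= i)%N.
    rewrite leqNgt; apply/negP => hlt; move: hi; rewrite !cz //; last by lia.
    by rewrite /= -addn1 (modn_small); [lia | have := ltn_ord i; lia].
  have hk : (i - (m - 2) < 12)%N by have := ltn_ord i; have := n10; lia.
  apply/imsetP; exists (Ordinal hk) => //=.
  by rewrite subnKC // pos_val.
Qed.

Lemma main_sec : min_pair_dist C 12%N /\ #|C| = (p ^ (3 * p - 12 + 2))%N.
Proof.
split; last by rewrite card_C; congr (_ ^ _)%N; have := p5; lia.
split; first exact: exists12.
move=> x y hx hy hxy; rewrite pair_dist_Pw; apply: lower; first exact: CB.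
by rewrite subr_eq0.
Qed.
End Code.

Lemma exists_w (p : nat) (hp : prime p) (p5 : (5 < p)%N) (h3 : (3 %| p.-1)%N) :
  exists w : 'F_p, w ^+ 2 + w + 1 = 0.
Proof.
pose e := (p.-1 %/ 3)%N.
have hpe : p.-1 = (e * 3)%N by rewrite divnK.
have he : (1 < e)%N by move: hpe; lia.
have [x hx] : exists x : 'F_p, (x != 0) && (x ^+ e != 1).
  case: (boolP [exists x : 'F_p, (x != 0) && (x ^+ e != 1)]) => [/existsP //|/existsPn hall].
  exfalso.
  pose rs := enum [pred x : 'F_p | x != 0].
  have urs : uniq rs := enum_uniq _.
  have szrs : size rs = p.-1.
    by rewrite -cardE (cardC1 (0 : 'F_p)) card_Fp.
  have hq : ('X^e - 1%:P : {poly 'F_p}) != 0.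
    by rewrite -size_poly_eq0 size_XnsubC //; lia.
  have := @max_poly_roots _ ('X^e - 1%:P) rs hq.
  rewrite size_XnsubC; last by lia.
  have -> : all (root ('X^e - 1%:P)) rs.
    apply/allP => y; rewrite mem_enum inE => hy.
    have := hall y; rewrite hy /= negbK => /eqP hy1.
    by rewrite rootE !hornerE hy1 subrr.
  by move=> /(_ isT urs); rewrite szrs; lia.
move: hx => /andP [hx0 hxe].
have hF : x ^+ p.-1 = 1.
  have E := expf_card x.
  have hc : #|'F_p| = p.-1.+1 by rewrite card_Fp // prednK // prime_gt0.
  rewrite hc exprS in E.
  by apply: (mulfI hx0); rewrite mulr1.
exists (x ^+ e).
have h3' : (x ^+ e) ^+ 3 = 1 by rewrite -exprM -hpe.
have : ((x ^+ e) - 1) * ((x ^+ e) ^+ 2 + x ^+ e + 1) = 0.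
  by rewrite (_ : _ * _ = (x ^+ e) ^+ 3 - 1); [rewrite h3' subrr | ring].
by move/eqP; rewrite mulf_eq0 subr_eq0 (negbTE hxe) /= => /eqP.
Qed.

Local Close Scope ring_scope.

Theorem theorem2 (p : nat) (hp : prime p) (hodd : odd p) (h3 : 3 %| p.-1) :
  exists C : {set word 'F_p (3 * p)},
    min_pair_dist C 12 /\ #|C| = p ^ (3 * p - 12 + 2).
Proof.
have p5 : 5 < p.
  by move: hp hodd h3; case: p => [|[|[|[|[|[|p]]]]]].
have [w hw] := exists_w hp p5 h3.
exists (C w).
exact (main_sec hp p5 hw).
Qed.
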